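(* Let $d\geq 1$ and $r\geq 2$ be integers. Then $M(2r-1,r,d)\le d+1$.
   Context: All measures are probability measures on $\mathbb{R}^d$ absolutely continuous with respect to Lebesgue measure. A convex partition of $\mathbb{R}^d$ into $n$ parts is an ordered tuple $(K_1,\dots,K_n)$ of closed convex sets with union $\mathbb{R}^d$ and pairwise disjoint interiors (some parts may be empty). $M(n,r,d)$ is the largest integer $M$ such that for any $M$ measures $\mu_1,\dots,\mu_M$ on $\mathbb{R}^d$ there is a convex partition $(K_1,\dots,K_n)$ of $\mathbb{R}^d$ into $n$ parts and a map $\ell\colon[n]\to[r]$ with $\mu_j\big(\bigcup_{i\in\ell^{-1}(s)}K_i\big)=\tfrac1r$ for all $1\le j\le M$ and $1\le s\le r$. *)

(* Defs.v *)
(* R^d is rendered as 'rV[R]_d (row vectors) with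
   the library's (product) topology; its Borel sigma-algebra is the
   sigma-algebra generated by the open sets. *)
From HB Require Import structures.
From mathcomp Require Import all_boot all_order all_algebra.
From mathcomp Require Import all_classical all_reals all_analysis.
Set Implicit Arguments. Unset Strict Implicit. Unset Printing Implicit Defensive.
Import Order.TTheory GRing.Theory Num.Theory.
Import numFieldNormedType.Exports.
Local Open Scope classical_set_scope.
Local Open Scope ring_scope.

Section Defs.
Variables (R : realType) (d : nat).

Definition borelRd := g_sigma_algebraType (@open 'rV[R]_d).

Definition box (a b : 'rV[R]_d) : set 'rV[R]_d :=
  [set x | forall i, a ord0 i <= x ord0 i <= b ord0 i].
Definition box_vol (a b : 'rV[R]_d) : R :=
  \prod_(i < d) Num.max 0 (b ord0 i - a ord0 i).

Definition lebesgue_null (A : set 'rV[R]_d) : Prop :=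
  forall eps : R, 0 < eps -> exists a b : nat -> 'rV[R]_d,
    A `<=` \bigcup_k box (a k) (b k) /\
    (\sum_(0 <= k <oo) (box_vol (a k) (b k))%:E <= eps%:E)%E.

Definition abs_continuous (mu : probability borelRd R) : Prop :=
  forall A : set borelRd, measurable A -> lebesgue_null A -> mu A = 0%E.

Definition convex_set (K : set 'rV[R]_d) : Prop :=
  forall x y, K x -> K y -> forall t : R, 0 <= t <= 1 ->
    K ((1 - t) *: x + t *: y).

Definition convex_partition (n : nat) (K : 'I_n -> set 'rV[R]_d) : Prop :=
  [/\ forall i, closed (K i) /\ convex_set (K i),
      \bigcup_(i in [set: 'I_n]) K i = [set: 'rV[R]_d] &
      forall i j, i != j -> (interior (K i)) `&` (interior (K j)) = set0].

(* the property defining M(n,r,d): any M abs. continuous probability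
   measures admit a convex partition into n parts and a labelling
   l : [n] -> [r] equipartitioning every measure *)
Definition equipart_property (n r M : nat) : Prop :=
  forall mu : 'I_M -> probability borelRd R,
    (forall j, abs_continuous (mu j)) ->
    exists K : 'I_n -> set 'rV[R]_d, convex_partition K /\
    exists l : 'I_n -> 'I_r, forall (j : 'I_M) (s : 'I_r),
      mu j (\bigcup_(i in [set i | l i = s]) K i : set borelRd) = (r%:R^-1)%:E.

End Defs.

(* Main.v *)
From HB Require Import structures.
From mathcomp Require Import all_boot all_order all_algebra.
From mathcomp Require Import all_classical all_reals all_analysis.
From mathcomp Require Import measurable_realfun.
Set Implicit Arguments. Unset Strict Implicit. Unset Printing Implicit Defensive.
Import Order.TTheory GRing.Theory Num.Theory.
Import numFieldNormedType.Exports.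
Local Open Scope classical_set_scope.
Local Open Scope ring_scope.
From mathcomp Require Import zify.
From mathcomp Require Import ring lra.
Require Import Defs.

Definition mkMF d1 d2 (T1 : measurableType d1) (T2 : measurableType d2)
  (f : T1 -> T2) (mf : measurable_fun setT f) : {mfun T1 >-> T2} :=
  HB.pack f (isMeasurableFun.Build _ _ _ _ f mf).

Section tup.
Variable R : realType.

Definition unif := [the probability _ R of uniform_prob (@ltr01 R)].
Local Notation RR := (measurableTypeR R).

Definition consT n (x : RR * n.-tuple RR) : n.+1.-tuple RR := [tuple of x.1 :: x.2].

Lemma consT_mes n : measurable_fun setT (@consT n).
Proof. exact: measurable_cons measurable_fst measurable_snd. Qed.

Fixpoint nu (n : nat) : probability (n.-tuple RR) R :=
  match n with
  | 0 => [the probability _ _ of @dirac _ _ [tuple] R]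
  | n'.+1 => [the probability _ _ of distribution (unif \x nu n')%E (mkMF (@consT_mes n'))]
  end.


Definition tbox n (a b : 'I_n -> R) : set (n.-tuple RR) :=
  [set t | forall i, a i <= (tnth t i : R) <= b i].

Lemma tbox_mes n (a b : 'I_n -> R) : measurable (tbox a b).
Proof.
have -> : tbox a b = \bigcap_(i in [set: 'I_n]) ((@tnth n RR)^~ i @^-1` `[a i, b i]).
  apply/seteqP; split => t /=.
    by move=> H i _ /=; rewrite in_itv /=; exact: H.
  by move=> H i; have := H i I; rewrite /= in_itv.
apply: fin_bigcap_measurable; first exact: finite_finset.
move=> i _; rewrite -[X in measurable X]setTI.
by apply: (measurable_tnth i) => //; exact: measurable_itv.
Qed.

Lemma unif_le (a b : R) : (unif `[a, b]%classic <= (Num.max 0 (b - a))%:E)%E.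
Proof.
rewrite /unif /= /uniform_prob.
apply: (@le_trans _ _ (\int[lebesgue_measure]_(x in `[a, b]) (cst 1%:E) x)%E).
  apply: ge0_le_integral => //.
  - by move=> x _; rewrite lee_fin uniform_pdf_ge0.
  - apply/measurable_EFinP/measurable_funTS; exact: measurable_uniform_pdf.
  - by move=> x _; rewrite /uniform_pdf; case: ifPn => _; rewrite lee_fin ?subr0 ?invr1.
rewrite integral_cst //= mul1e lebesgue_measure_itv /=.
case: ifPn => ab; last by rewrite lee_fin le_max lexx.
by rewrite -EFinB lee_fin le_max lexx orbT.
Qed.

Lemma unif01 : unif `[0, 1]%classic = 1%E.
Proof. by rewrite /unif /= /uniform_prob integral_uniform_pdf1. Qed.

Lemma consT_tbox n (a b : 'I_n.+1 -> R) :
  @consT n @^-1` tbox a b =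
  `[a ord0, b ord0]%classic `*` tbox (fun i : 'I_n => a (lift ord0 i)) (fun i : 'I_n => b (lift ord0 i)).
Proof.
apply/seteqP; split => [[x t]|[x t]] /=.
  move=> H; split.
    by have := H ord0; rewrite /consT /= (tnth_nth x) /= in_itv.
  by move=> i; have := H (lift ord0 i); rewrite /consT tnthS.
move=> [] /=; rewrite in_itv /= => H0 H i.
case: (unliftP ord0 i) => [j ->|->]; first by rewrite /consT tnthS.
by rewrite /consT (tnth_nth x).
Qed.

Lemma nu_tbox n (a b : 'I_n -> R) :
  (nu n (tbox a b) <= (\prod_(i < n) Num.max 0 (b i - a i))%:E)%E.
Proof.
elim: n a b => [|n IH] a b.
  rewrite big_ord0 -(probability_setT (nu 0)).
  by apply: le_measure; rewrite ?inE //; exact: tbox_mes.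
rewrite big_ord_recl /=.
rewrite /distribution /pushforward /=.
rewrite consT_tbox product_measure1E //; last exact: tbox_mes.
rewrite EFinM; apply: lee_pmul => //.
- exact: unif_le.
- exact: IH.
Qed.

Lemma nu_cube n : nu n (tbox (fun=> 0) (fun=> 1)) = 1%E.
Proof.
elim: n => [|n IH].
  have -> : tbox (fun=> 0) (fun=> 1) = [set: 0.-tuple RR].
    by apply/seteqP; split => // t _ [].
  exact: probability_setT.
rewrite /= /distribution /pushforward /=.
rewrite consT_tbox product_measure1E //; last exact: tbox_mes.
transitivity (unif `[0%R, 1%R]%classic * 1)%E; last by rewrite mule1; exact: unif01.
by congr (_ * _)%E; exact: IH.
Qed.

End tup.

Section Rd.
Variables (R : realType) (d : nat).
Local Notation V := 'rV[R]_d.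
Local Notation Q := {ffun 'I_d -> rat * rat}.

Definition obox (q : Q) : set V :=
  [set x | forall i, ratr (q i).1 < x ord0 i < ratr (q i).2].

Lemma open_cover (U : set V) : open U ->
  U = \bigcup_(q in [set: Q]) [set x | obox q `<=` U /\ obox q x].
Proof.
move=> oU; apply/seteqP; split => [x Ux|x [q _ [+ +]]]; last by apply.
case: (oU x Ux) => P Pn PU.
have H : forall i : 'I_d, exists qq : rat * rat,
    (ratr qq.1 < x ord0 i < ratr qq.2) /\
    (forall y : R, ratr qq.1 < y < ratr qq.2 -> P ord0 i y).
  move=> i; have /nbhs_ballP [e /= e0 He] := Pn ord0 i.
  have [q1] : exists q : rat, ratr q \in `](x ord0 i - e), (x ord0 i)[.
    by apply: rat_in_itvoo; rewrite ltrBlDr ltrDl.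
  have [q2] : exists q : rat, ratr q \in `](x ord0 i), (x ord0 i + e)[.
    by apply: rat_in_itvoo; rewrite ltrDl.
  rewrite !in_itv /= => /andP [h1 h2] /andP [h3 h4].
  exists (q1, q2); split; first by rewrite h4 h1.
  move=> y /andP [y1 y2] /=; apply: He.
  rewrite /ball /= ltr_distl; apply/andP; split.
  - by rewrite /= in y1 y2; lra.
  - by rewrite /= in y1 y2; lra.
have [f Hf] := choice H.
exists [ffun i => f i] => //; split; last first.
  by move=> i; rewrite ffunE; case: (Hf i).
move=> y Hy; apply: PU => i j; rewrite (ord1 i).
by case: (Hf j) => _; apply; have := Hy j; rewrite ffunE.

Qed.

Lemma mes_Rd dT (T : measurableType dT) (f : T -> borelRd R d) :
  (forall i, measurable_fun setT (fun x => (f x : V) ord0 i : R)) ->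
  measurable_fun setT f.
Proof.
move=> mf; apply: (@measurability _ _ T (borelRd R d) setT f (@open V)); first by [].
move=> _ [U oU <-].
rewrite (open_cover oU) preimage_bigcup setTI.
apply: countable_bigcupT_measurable; first exact: countableP.
move=> q; case: (pselect (obox q `<=` U)) => Hq; last first.
  have -> : f @^-1` [set x | obox q `<=` U /\ obox q x] = set0 by
    apply/seteqP; split => // x [].
  exact: measurable0.
have -> : f @^-1` [set x | obox q `<=` U /\ obox q x] =
    \bigcap_(i in [set: 'I_d]) ((fun x => (f x : V) ord0 i : R) @^-1` `](ratr (q i).1), (ratr (q i).2)[).
  apply/seteqP; split => x /=.
    by move=> [_ H] i _ /=; rewrite in_itv /=; exact: H.
  by move=> H; split => // i; have := H i I; rewrite /= in_itv.
apply: fin_bigcap_measurable; first exact: finite_finset.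
move=> i _; rewrite -[X in measurable X]setTI.
by apply: mf => //; exact: measurable_itv.
Qed.
End Rd.

Section PP.
Variables (R : realType) (d : nat).
Local Notation V := 'rV[R]_d.
Local Notation RR := (measurableTypeR R).

Definition Gm (v : V) (e : R) (t : d.-tuple RR) : borelRd R d :=
  v + e *: \row_i (tnth t i : R).

Lemma Gm_coord v e t i : (Gm v e t : V) ord0 i = v ord0 i + e * (tnth t i : R).
Proof. by rewrite /Gm !mxE. Qed.

Lemma Gm_mes v e : measurable_fun setT (Gm v e).
Proof.
apply: mes_Rd => i.
have -> : (fun x => (Gm v e x : V) ord0 i) = (fun x => v ord0 i + e * (tnth x i : R)).
  by apply: funext => x; rewrite Gm_coord.
apply: measurable_funD; first exact: measurable_cst.
apply: measurable_funM; first exact: measurable_cst.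
exact: measurable_tnth.
Qed.

Definition PP v e : probability (borelRd R d) R :=
  distribution (nu R d) (mkMF (Gm_mes v e)).

Lemma PPE v e A : PP v e A = nu R d (Gm v e @^-1` A).
Proof. by []. Qed.

End PP.
Section PP2.
Variables (R : realType) (d : nat).
Local Notation V := 'rV[R]_d.
Local Notation RR := (measurableTypeR R).

Lemma maxM0 (x c : R) : 0 < c -> Num.max 0 (x / c) = c^-1 * Num.max 0 x.
Proof.
move=> c0; rewrite maxr_pMr ?invr_ge0 ?ltW // mulr0 mulrC //.
Qed.

Lemma Gm_box (v : V) e a b : 0 < e -> Gm v e @^-1` box a b =
  tbox (fun i => (a ord0 i - v ord0 i) / e) (fun i => (b ord0 i - v ord0 i) / e).
Proof.
move=> e0; apply/seteqP; split => t /= H i; have := H i; rewrite ?Gm_coord.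
  move: (tnth t i : R) => y.
  by rewrite ler_pdivrMr // ler_pdivlMr // => /andP [h1 h2]; apply/andP; split; lra.
move: (tnth t i : R) => y.
by rewrite ler_pdivrMr // ler_pdivlMr // => /andP [h1 h2]; apply/andP; split; lra.
Qed.

Lemma nu_Gbox (v : V) e a b : 0 < e ->
  (nu R d (Gm v e @^-1` box a b) <= (box_vol a b * e^-1 ^+ d)%:E)%E.
Proof.
move=> e0; rewrite Gm_box //; apply: le_trans (nu_tbox _ _) _.
rewrite lee_fin /box_vol.
under eq_bigr => i _ do rewrite -mulrBl opprB addrA subrK maxM0 //.
by rewrite prodrMl card_ord mulrC.
Qed.

Lemma PP_abs (v : V) e : 0 < e -> abs_continuous (PP v e).
Proof.
move=> e0 A mA nA; apply/eqP; rewrite -measure_le0.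
apply/lee_addgt0Pr => eps eps0; rewrite add0e.
have ed0 : 0 < e ^+ d by rewrite exprn_gt0.
have [a [b [Acov Hsum]]] := nA (eps * e ^+ d) (mulr_gt0 eps0 ed0).
change (nu R d (Gm v e @^-1` A) <= eps%:E)%E.
apply: le_trans (@measure_sigma_subadditive _ _ _ (nu R d) _
   (fun k => Gm v e @^-1` box (a k) (b k)) _ _ _) _.
- move=> k; rewrite Gm_box //; exact: tbox_mes.
- by rewrite -[X in measurable X]setTI; apply: Gm_mes.
- by move=> x /Acov.
apply: le_trans (lee_nneseries (v := fun k => ((e^-1 ^+ d)%:E * (box_vol (a k) (b k))%:E)%E) _ _) _.
- by move=> *; exact: measure_ge0.
- by move=> k _; rewrite -EFinM mulrC; exact: nu_Gbox.
rewrite nneseriesZl; last first.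
  move=> k _; rewrite lee_fin /box_vol; apply: prodr_ge0 => i _.
  by rewrite le_max lexx.
apply: le_trans (lee_wpmul2l _ Hsum) _.
  by rewrite lee_fin exprn_ge0 // invr_ge0 ltW.
rewrite -EFinM lee_fin exprVn mulrCA mulVf ?mulr1 // gt_eqF //.
Qed.

Lemma Gm_pre_mes (v : V) e (K : set (borelRd R d)) : measurable K ->
  measurable (Gm v e @^-1` K).
Proof. by move=> mK; rewrite -[X in measurable X]setTI; apply: Gm_mes. Qed.

Lemma PP_pos (v : V) e (K : set (borelRd R d)) : measurable K ->
  PP v e K != 0%E -> exists t, tbox (fun=> 0) (fun=> 1) t /\ K (Gm v e t).
Proof.
move=> mK; apply: contra_neqP => H.
have sub : Gm v e @^-1` K `<=` ~` tbox (fun=> 0) (fun=> 1).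
  by move=> t Kt Bt; apply: H; exists t.
change (nu R d (Gm v e @^-1` K) = 0%E).
apply/eqP; rewrite -measure_le0.
have : (nu R d (~` tbox (fun=> 0%R) (fun=> 1%R)) = 0)%E.
  by rewrite probability_setC ?nu_cube ?subee //; exact: tbox_mes.
move=> <-; apply: le_measure => //; rewrite inE.
  exact: Gm_pre_mes.
by apply: measurableC; exact: tbox_mes.
Qed.

Lemma PP_full (v : V) e (K : set (borelRd R d)) : measurable K ->
  (forall t, tbox (fun=> 0) (fun=> 1) t -> K (Gm v e t)) -> PP v e K = 1%E.
Proof.
move=> mK H; change (nu R d (Gm v e @^-1` K) = 1%E).
apply/eqP; rewrite eq_le probability_le1 ?Gm_pre_mes //=.
rewrite -(nu_cube R d); apply: le_measure.
- rewrite inE; exact: tbox_mes.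
- rewrite inE; exact: Gm_pre_mes.
- by move=> t Ht; exact: H.
exact: Gm_pre_mes.
Qed.

End PP2.

Section Geo.
Variables (R : realFieldType) (d : nat).
Local Notation V := 'rV[R]_d.

Definition l1 (s : V) := \sum_i `|s ord0 i|.

Lemma l1_ge0 s : 0 <= l1 s.
Proof. by apply: sumr_ge0 => i _. Qed.

Variables (del : R) (E : 'M[R]_d).
Hypothesis del0 : 0 <= del.
Hypothesis hE : forall k i, `|E k i| <= del.

Definition W := 1%:M + E.

Lemma sE_bound (s : V) i : `|(s *m E) ord0 i| <= del * l1 s.
Proof.
rewrite mxE; apply: le_trans (ler_norm_sum _ _ _) _.
rewrite /l1 mulr_sumr; apply: ler_sum => k _.
by rewrite normrM mulrC ler_wpM2r.
Qed.

Lemma sW_split (s : V) i : s ord0 i = (s *m W) ord0 i - (s *m E) ord0 i.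
Proof. by rewrite /W mulmxDr mulmx1 mxE addrK. Qed.

Lemma l1_key (s : V) i : `|s ord0 i| <= `|(s *m W) ord0 i| + del * l1 s.
Proof.
rewrite {1}sW_split; apply: le_trans (ler_normB _ _) _.
by rewrite lerD2l sE_bound.
Qed.

Lemma l1_bound (s : V) : (1 - d%:R * del) * l1 s <= l1 (s *m W).
Proof.
have H : l1 s <= l1 (s *m W) + d%:R * del * l1 s.
  rewrite {1}/l1; apply: le_trans (ler_sum _ (fun i _ => l1_key s i)) _.
  by rewrite big_split /= sumr_const card_ord -[_ *+ d]mulr_natl !mulrA.
by rewrite mulrBl mul1r lerBlDr.
Qed.

Lemma l1_eq0 (s : V) : l1 s = 0 -> s = 0.
Proof.
move=> H; apply/rowP => i; rewrite mxE; apply/normr0_eq0.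
apply/eqP; rewrite eq_le normr_ge0 andbT -H /l1.
rewrite (bigD1 i) //= lerDl; exact: sumr_ge0.
Qed.

Hypothesis small : d%:R * del < 1.

Lemma W_unit : W \in unitmx.
Proof.
rewrite -row_free_unit -kermx_eq0; apply/eqP/row_matrixP => k.
rewrite row0; apply: l1_eq0; apply/eqP; rewrite eq_le l1_ge0 andbT.
have := l1_bound (row k (kermx W)).
rewrite -row_mul mulmx_ker row0.
have -> : l1 0 = 0 by rewrite /l1 big1 // => i _; rewrite mxE normr0.
move=> h; have := l1_ge0 (row k (kermx W)); move: (l1 _) h => L; move: (d%:R * del) small => a ha h h2; nra.
Qed.


End Geo.

Section Solve.
Variables (R : realFieldType) (d : nat).
Local Notation V := 'rV[R]_d.
Variables (del c : R) (x0 y : V) (x : 'I_d -> V).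
Hypothesis del0 : 0 <= del.
Hypothesis H2 : d%:R * del <= 1/16.
Hypothesis H3 : 2 * del <= c.
Hypothesis H4 : d%:R * (c + del) <= 9/16.
Hypothesis hx0 : forall i, 0 <= x0 ord0 i <= del.
Hypothesis hx : forall k i, (k == i)%:R <= x k ord0 i <= (k == i)%:R + del.
Hypothesis hy : forall i, c <= y ord0 i <= c + del.

Ltac sl := move: del0 H2 H3 H4 => ? ? ? ?; lra.

Definition Em : 'M[R]_d := \matrix_(k, i) (x k ord0 i - x0 ord0 i - (k == i)%:R).

Lemma Em_bound k i : `|Em k i| <= del.
Proof.
rewrite mxE; have := hx0 i; have := hx k i; move: ((k == i)%:R) => a.
by move=> /andP [h1 h2] /andP [h3 h4]; rewrite ler_norml; apply/andP; split; lra.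
Qed.

Lemma W_entry k i : W Em k i = x k ord0 i - x0 ord0 i.
Proof. by rewrite /W !mxE; ring. Qed.

Lemma solve : exists t : 'I_d -> R, (forall k, 0 <= t k) /\ \sum_k t k <= 1 /\
  y = (1 - \sum_k t k) *: x0 + \sum_k t k *: x k.
Proof.
have small : d%:R * del < 1.
  by have := H2; lra.
have Wu : W Em \in unitmx by apply: (W_unit (del := del)) => //; exact: Em_bound.
pose z := y - x0.
have [t tW] : exists t : V, t *m W Em = z by exists (z *m invmx (W Em)); rewrite mulmxKV.
have hz i : c - del <= z ord0 i <= c + del.
  by rewrite /z !mxE; have := hx0 i; have := hy i => /andP [? ?] /andP [? ?]; apply/andP; split; lra.
have Lz : l1 z <= d%:R * (c + del).
  have -> : d%:R * (c + del) = \sum_(i < d) (c + del) by rewrite sumr_const card_ord mulr_natl.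
  apply: ler_sum => i _.
  by have := hz i => /andP [h1 h2]; rewrite ler_norml; apply/andP; split; sl.
have Lt := @l1_bound _ _ del Em Em_bound t; rewrite tW in Lt.
have Lt1 : l1 t <= 3/5.
  have Lz' : l1 z <= 9/16 by apply: le_trans Lz H4.
  have := l1_ge0 t; move: (l1 t) (l1 z) Lt Lz' => L lz Lt Lz' L0.
  move: (d%:R * del) H2 Lt => a ha Lt; nra.
have ti i : c - del - del * l1 t <= t ord0 i.
  rewrite (sW_split Em t i) tW.
  have := @sE_bound _ _ del Em Em_bound t i; rewrite ler_norml => /andP [_ h].
  by have := hz i => /andP [h1 _]; lra.
have L0 := l1_ge0 t.
exists (fun k => t ord0 k); split; [|split].
- move=> k; have := ti k; have : del * l1 t <= del.
    by rewrite ler_piMr //; apply: le_trans Lt1 _; lra.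
  by move: del0 H3 => ? ?; lra.
- apply: le_trans (_ : l1 t <= 1); last by lra.
  by apply: ler_sum => k _; exact: ler_norm.
- apply/rowP => i; have zi : z ord0 i = \sum_k t ord0 k * (x k ord0 i - x0 ord0 i).
    by rewrite -tW mxE; apply: eq_bigr => k _; rewrite W_entry.
  have -> : y ord0 i = x0 ord0 i + z ord0 i by rewrite /z !mxE; ring.
  rewrite zi !mxE summxE.
  under [X in _ = _ + X]eq_bigr => k _ do rewrite mxE.
  rewrite (_ : (0 : 'I_1) = ord0); last exact: val_inj.
  rewrite mulrBl mul1r mulr_suml -addrA; congr (_ + _).
  by rewrite -sumrN -big_split /=; apply: eq_bigr => k _; ring.
Qed.
End Solve.

Section Conv.
Variables (R : realType) (d : nat).
Local Notation V := 'rV[R]_d.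

Lemma conv_comb (K : set V) : convex_set K -> forall n (p : 'I_n -> V) (w : 'I_n -> R) p0,
  K p0 -> (forall k, K (p k)) -> (forall k, 0 <= w k) -> \sum_k w k <= 1 ->
  K ((1 - \sum_k w k) *: p0 + \sum_k w k *: p k).
Proof.
move=> cK; elim => [|n IH] p w p0 Kp0 Kp w0 w1.
  by rewrite !big_ord0 subr0 scale1r addr0.
rewrite !big_ord_recl /=.
set a := w ord0; set S := \sum_(i < n) w (lift ord0 i).
set Sg := \sum_(i < n) w (lift ord0 i) *: p (lift ord0 i).
have S0 : 0 <= S by apply: sumr_ge0 => i _.
have a0 : 0 <= a := w0 ord0.
have aS : a + S <= 1 by move: w1; rewrite big_ord_recl.
have IH' := IH (fun i => p (lift ord0 i)) (fun i => w (lift ord0 i)).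
case: (ltrP S 1) => hS; last first.
  have aE : a = 0.
    by apply/eqP; rewrite eq_le a0 andbT -(lerD2r S) add0r (le_trans aS hS).
  have SE : 1 - (a + S) = 1 - S by rewrite aE add0r.
  rewrite SE aE scale0r add0r; apply: IH' => //.
  by apply: le_trans aS; apply: ler_wpDl.
pose b := a / (1 - S).
have b0 : 0 <= b <= 1.
  apply/andP; split; first by rewrite divr_ge0 // subr_ge0 ltW.
  by rewrite ler_pdivrMr ?subr_gt0 // mul1r; lra.
have Kq := cK p0 (p ord0) Kp0 (Kp ord0) b b0.
have := IH' ((1 - b) *: p0 + b *: p (ord0)) Kq (fun i => Kp _) (fun i => w0 _) (ltW hS).
congr K; rewrite -/S -/Sg addrA; congr (_ + _).
have nz : 1 - S != 0 by rewrite subr_eq0 eq_sym lt_eqF.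
rewrite scalerDr !scalerA; congr (_ + _); congr (_ *: _); rewrite /b; field; done.
Qed.

End Conv.

Lemma pigeon (r : nat) (l : 'I_(2 * r - 1) -> 'I_r) :
  (0 < r)%N -> (forall s, exists i, l i = s) -> exists s i0, forall i, l i = s <-> i = i0.
Proof.
move=> r0 Hne.
have Hsum : \sum_(s < r) #|[pred i | l i == s]| = (2 * r - 1)%N.
  transitivity #|'I_(2 * r - 1)|; last exact: card_ord.
  rewrite -sum1_card (partition_big l predT) //=.
  by apply: eq_bigr => s _; rewrite sum1_card.
have [s Hs] : exists s, (#|[pred i | l i == s]| <= 1)%N.
  case: (boolP [exists s, (#|[pred i | l i == s]| <= 1)%N]) => [/existsP //| /existsPn H].
  have : (\sum_(s < r) 2 <= \sum_(s < r) #|[pred i | l i == s]|)%N.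
    by apply: leq_sum => s _; have := H s; rewrite -ltnNge.
  rewrite Hsum sum_nat_const card_ord => h; exfalso; lia.
have [i0 Hi0] := Hne s.
exists s, i0 => i; split => [Hi|->//].
have := card_le1_eqP Hs; move=> /(_ i i0).
by rewrite !inE Hi Hi0 eqxx => ->.
Qed.


Lemma Gm_in (R : realType) (d : nat) (v : 'rV[R]_d) e t : 0 <= e ->
  tbox (fun=> 0) (fun=> 1) t ->
  forall i, v ord0 i <= (Gm v e t : 'rV[R]_d) ord0 i <= v ord0 i + e.
Proof.
move=> e0 Ht i; rewrite Gm_coord; have := Ht i; move: (tnth t i : R) => y.
by move=> /andP [h1 h2]; apply/andP; split; nra.
Qed.

Lemma closed_mes (R : realType) (d : nat) (A : set 'rV[R]_d) : closed A ->
  measurable (A : set (borelRd R d)).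
Proof.
move=> cA; rewrite -[A]setCK; apply: measurableC; apply: sub_sigma_algebra.
exact: closed_openC.
Qed.


Unset Implicit Arguments.
Close Scope ring_scope.
Close Scope classical_set_scope.

Theorem mainTheorem4 (R : realType) (d r : nat) :
  (1 <= d)%N -> (2 <= r)%N ->
  forall M : nat, equipart_property R d (2 * r - 1) r M -> (M <= d + 1)%N.
Proof.
Open Scope classical_set_scope. Open Scope ring_scope.
move=> d1 r2 M HP; rewrite leqNgt; apply/negP => hM.
pose D : R := d%:R.
have hD : 1 <= D by rewrite /D ler1n.
pose del : R := (16 * (D * D))^-1.
have del0 : 0 < del by rewrite /del invr_gt0; nra.
have F : 16 * (D * D) * del = 1 by rewrite /del mulfV //; apply/eqP; nra.
pose c : R := 8 * D * del.
pose vtx (j : nat) : 'rV[R]_d := \row_(i < d) ((j == i :> nat)%:R).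
pose cv : 'rV[R]_d := \row_(i < d) c.
pose mus (j : 'I_M) : probability (borelRd R d) R :=
  if (j < d)%N then PP (vtx j) del else if (j == d :> nat) then PP 0 del else PP cv del.
have mus_abs : forall j, abs_continuous (mus j).
  by move=> j; rewrite /mus; case: ifP => _; [|case: ifP => _]; apply: PP_abs.
have [K [[Kcc Kcov Kint] [l Hl]]] := HP mus mus_abs.
have rinv0 : (r%:R^-1 : R) != 0 by rewrite invr_eq0 pnatr_eq0; lia.
have M0 : (0 < M)%N by lia.
have Hne : forall s, exists i, l i = s.
  move=> s; apply: contrapT => Hn.
  have := Hl (Ordinal M0) s.
  rewrite (_ : \bigcup_(i in [set i | l i = s]) K i = set0) ?measure0.
    by move=> /esym/eqP; rewrite eqe (negbTE rinv0).
  by apply/seteqP; split => // x [i /= li _]; apply: Hn; exists i.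
have [s [i0 Hi0]] := pigeon (ltnW r2) Hne.
have HK : forall j, mus j (K i0) = (r%:R^-1)%:E.
  move=> j; have := Hl j s.
  rewrite (_ : \bigcup_(i in [set i | l i = s]) K i = K i0) //.
  apply/seteqP; split => [x [i /= li Kx]|x Kx].
    by have := (Hi0 i).1 li => <-.
  by exists i0 => //=; exact/(Hi0 i0).2.
have [Kcl Kcv] := Kcc i0.
have mK := closed_mes Kcl.
have rpos : (0 < (r%:R^-1 : R)%:E)%E by rewrite lte_fin invr_gt0 ltr0n; lia.
have xk : forall k : 'I_d, exists p : 'rV_d, K i0 p /\
    forall i, (k == i)%:R <= p ord0 i <= (k == i)%:R + del.
  move=> k; have kM : (k < M)%N by have := ltn_ord k; lia.
  have := HK (Ordinal kM); rewrite /mus /= ltn_ord => Hk.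
  have nz : PP (vtx k) del (K i0) != 0%E by rewrite Hk gt_eqF.
  have [t [Ht Kt]] := PP_pos mK nz.
  exists (Gm (vtx k) del t); split => // i.
  by have := Gm_in (vtx k) (ltW del0) Ht i; rewrite [vtx k ord0 i]mxE.
have [x Hx] := choice xk.
have dM : (d < M)%N by lia.
have [p0 [Kp0 Hp0]] : exists p : 'rV_d, K i0 p /\ forall i, 0 <= p ord0 i <= del.
  have := HK (Ordinal dM); rewrite /mus /= ltnn eqxx => Hk.
  have nz : PP 0 del (K i0) != 0%E by rewrite Hk gt_eqF.
  have [t [Ht Kt]] := PP_pos mK nz.
  exists (Gm 0 del t); split => // i.
  by have := Gm_in (0) (ltW del0) Ht i; rewrite [(0 : 'rV_d) ord0 i]mxE add0r.
have H2 : d%:R * del <= 1/16 by rewrite -/D; nra.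
have H3 : 2 * del <= c by rewrite /c; nra.
have H4 : d%:R * (c + del) <= 9/16 by rewrite -/D /c; nra.
have Kc : forall t, tbox (fun=> 0) (fun=> 1) t -> K i0 (Gm cv del t).
  move=> t Ht.
  have hy : forall i, c <= (Gm cv del t : 'rV_d) ord0 i <= c + del.
    by move=> i; have := Gm_in (cv) (ltW del0) Ht i; rewrite [cv ord0 i]mxE.
  have [w [w0 [w1 ->]]] := solve (ltW del0) H2 H3 H4 Hp0 (fun k i => (proj2 (Hx k)) i) hy.
  by apply: conv_comb => // k; exact: (proj1 (Hx k)).
have cM : (d.+1 < M)%N by lia.
have := HK (Ordinal cM); rewrite /mus /=.
have -> : (d.+1 < d)%N = false by lia.
have -> : (d.+1 == d) = false by lia.
rewrite (PP_full mK Kc) => /eqP; rewrite eqe eq_sym invr_eq1 pnatr_eq1; lia.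
Qed.
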